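(* Let $n\ge1$, let $T\in\mathrm{URL}_n$, let $\sigma\in\mathrm{RS}(T)$ and $\tau=\Omega(\sigma)$. Then $\tau\in\mathrm{And}^{II}(T)$ and \begin{align*} \mathrm{ides}(\tau)&=\mathrm{ides}(\sigma),\\ \mathrm{imaj}(\tau)&=\mathrm{imaj}(\sigma)+\mathrm{ides}(\sigma),\\ \mathrm{inv}(\tau)&=\mathrm{inv}(\sigma)+n-1-\mathrm{RLmin}(\sigma). \end{align*}
   Context: The map $\Psi$ sends a word $\pi$ of distinct integers to an increasing binary tree: $\Psi(\emptyset)=\emptyset$; otherwise write $\pi=\sigma\, i\,\tau$ with $i$ the least letter, and let $\Psi(\pi)$ have root $i$, left subtree $\Psi(\sigma)$, right subtree $\Psi(\tau)$; $\Psi$ is a bijection from permutations of $[n]$ to increasing binary trees labeled by $[n]$. $\mathrm{URL}_n$ is the set of unlabeled rooted binary trees with $n$ vertices in which no vertex has a left child but no right child. A permutation $\sigma$ of $[n]$ is simsun if $\sigma_n=n$ and for each $k\in[n]$ the subword formed by the letters $1,\dots,k$ has no index $i$ with $w_i>w_{i+1}>w_{i+2}$. Andr\'e II permutations: the empty word and one-letter words are Andr\'e II; a word $\sigma$ of $\ge2$ distinct integers, written $\sigma=\tau\,\min(\sigma)\,\tau'$, is Andr\'e II if $\tau,\tau'$ are Andr\'e II and the smallest letter of $\tau\tau'$ lies in $\tau'$. $\mathrm{RS}(T)$, $\mathrm{And}^{II}(T)$ denote the simsun, resp. Andr\'e II, permutations $\sigma$ of $[n]$ whose tree $\Psi(\sigma)$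 has shape $T$. The map $\Omega$: given $\sigma\in\mathrm{RS}(T)$, let $\hat T=\Psi(\sigma)$ and let $R=\{v_0<v_1<\cdots<v_m\}$ be the set of vertices of $\hat T$ not belonging to any left subtree (the root and the vertices reached from it by right-child steps only); $v_0=1$, $v_m=n$. Relabel vertex $v_0$ by $1$ and vertex $v_i$ by $v_{i-1}+1$ for $1\le i\le m$, and relabel every vertex with label $x\notin R$ by $x+1$. This gives an increasing binary tree $\widetilde T$ on $[n]$ of the same shape, and $\Omega(\sigma)=\Psi^{-1}(\widetilde T)$. Statistics of a permutation $\sigma$ of $[n]$: $\mathrm{IDes}(\sigma)$ is the set of $i\in[n-1]$ such that $i+1$ appears to the left of $i$; $\mathrm{ides}(\sigma)=|\mathrm{IDes}(\sigma)|$; $\mathrm{imaj}(\sigma)=\sum_{i\in\mathrm{IDes}(\sigma)}i$; $\mathrm{inv}(\sigma)$ is the number of pairs $i<j$ with $\sigma_i>\sigma_j$; $\mathrm{RLmin}(\sigma)$ is the number of $\sigma_i$ with $\sigma_j>\sigma_i$ for all $j>i$. *)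

(* Defs.v *)
From mathcomp Require Import all_boot.
Set Implicit Arguments. Unset Strict Implicit. Unset Printing Implicit Defensive.

Definition is_perm (n : nat) (s : seq nat) : Prop := perm_eq s (iota 1 n).

(* Unlabeled rooted binary trees (BLeaf = empty tree). *)
Inductive btree : Type := BLeaf | BNode of btree & btree.

Inductive ltree : Type := LLeaf | LNode of nat & ltree & ltree.

Fixpoint nverts (t : btree) : nat :=
  match t with BLeaf => 0 | BNode l r => (nverts l + nverts r).+1 end.

(* no vertex has a left child but no right child *)
Fixpoint url_ok (t : btree) : bool :=
  match t with
  | BLeaf => true
  | BNode l r =>
      match l, r with
      | BNode _ _, BLeaf => false
      | _, _ => url_ok l && url_ok r
      end
  end.

Definition URL (n : nat) (T : btree) : Prop := nverts T = n /\ url_ok T.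

Fixpoint shape (t : ltree) : btree :=
  match t with LLeaf => BLeaf | LNode _ l r => BNode (shape l) (shape r) end.

Definition wmin (w : seq nat) : nat := foldr minn (head 0 w) w.

(* The map Psi, by recursion with fuel (fuel = size of the word suffices). *)
Fixpoint psi_f (k : nat) (w : seq nat) : ltree :=
  match k with
  | 0 => LLeaf
  | k'.+1 =>
      if w is [::] then LLeaf else
      let i := index (wmin w) w in
      LNode (wmin w) (psi_f k' (take i w)) (psi_f k' (drop i.+1 w))
  end.
Definition Psi (w : seq nat) : ltree := psi_f (size w) w.

(* Psi^{-1}: reading an increasing binary tree in symmetric (in-)order. *)
Fixpoint inorder (t : ltree) : seq nat :=
  match t with LLeaf => [::] | LNode x l r => inorder l ++ x :: inorder r end.

Definition has_dd (w : seq nat) : bool :=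
  has (fun i => (nth 0 w i > nth 0 w i.+1) && (nth 0 w i.+1 > nth 0 w i.+2))
      (iota 0 (size w - 2)).

Definition simsun (n : nat) (s : seq nat) : Prop :=
  [/\ is_perm n s, nth 0 s n.-1 = n &
      forall k, 1 <= k <= n -> ~~ has_dd [seq x <- s | x <= k]].

(* Andre II words, recursion with fuel (fuel = size of the word suffices) *)
Fixpoint andre_f (k : nat) (w : seq nat) : bool :=
  match k with
  | 0 => true
  | k'.+1 =>
      if size w <= 1 then true else
      let i := index (wmin w) w in
      let a := take i w in
      let b := drop i.+1 w in
      [&& andre_f k' a, andre_f k' b & wmin (a ++ b) \in b]
  end.
Definition andreII (w : seq nat) : bool := andre_f (size w) w.

Definition RS (n : nat) (T : btree) (s : seq nat) : Prop :=
  simsun n s /\ shape (Psi s) = T.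
Definition AndII (n : nat) (T : btree) (s : seq nat) : Prop :=
  [/\ is_perm n s, andreII s & shape (Psi s) = T].

Fixpoint rspine (t : ltree) : seq nat :=
  match t with LLeaf => [::] | LNode x _ r => x :: rspine r end.
Fixpoint lmap (f : nat -> nat) (t : ltree) : ltree :=
  match t with LLeaf => LLeaf | LNode x l r => LNode (f x) (lmap f l) (lmap f r) end.
(* R = [:: v_0; v_1; ...; v_m] (increasing along the right spine) *)
Definition omega_lab (R : seq nat) (x : nat) : nat :=
  if x \in R then
    (if index x R is j.+1 then (nth 0 R j).+1 else 1)
  else x.+1.
Definition Omega (s : seq nat) : seq nat :=
  let t := Psi s in inorder (lmap (omega_lab (rspine t)) t).

Definition IDes (s : seq nat) : seq nat :=
  [seq i <- iota 1 (size s).-1 | index i.+1 s < index i s].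
Definition ides (s : seq nat) : nat := size (IDes s).
Definition imaj (s : seq nat) : nat := sumn (IDes s).
Definition inversions (s : seq nat) : nat :=
  count (fun p : nat * nat => (p.1 < p.2) && (nth 0 s p.2 < nth 0 s p.1))
        [seq (i, j) | i <- iota 0 (size s), j <- iota 0 (size s)].
Definition RLmin (s : seq nat) : nat :=
  count (fun i => all (fun j => nth 0 s i < nth 0 s j) (iota i.+1 (size s - i.+1)))
        (iota 0 (size s)).

(* Main.v *)
Require Import Defs.
From mathcomp Require Import all_boot.
From Stdlib Require Import Lia.
From mathcomp Require Import zify.
Set Implicit Arguments. Unset Strict Implicit. Unset Printing Implicit Defensive.

Lemma wmin_foldr_le a w : foldr minn a w <= a /\ forall y, y \in w -> foldr minn a w <= y.
Proof.
elim: w => [|x w [IH1 IH2]] /=; first by split.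
split; first by rewrite geq_min IH1 orbT.
move=> y; rewrite inE => /orP[/eqP->|/IH2 H]; first by rewrite geq_min leqnn.
by rewrite geq_min H orbT.
Qed.

Lemma wmin_foldr_in a w : foldr minn a w \in a :: w.
Proof.
elim: w => [|x w IH] /=; first by rewrite inE.
rewrite /minn; case: ifP => _; first by rewrite !inE eqxx orbT.
move: IH; rewrite !inE => /orP[->|->] //; by rewrite !orbT.
Qed.

Lemma wmin_le w y : y \in w -> wmin w <= y.
Proof. by move=> Hy; case: (wmin_foldr_le (head 0 w) w) => _; apply. Qed.

Lemma wmin_in w : w != [::] -> wmin w \in w.
Proof.
case: w => // x w _; rewrite /wmin /=.
have := wmin_foldr_in x (x :: w); rewrite /= inE => /orP[/eqP ->|] //.
by rewrite inE eqxx.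
Qed.

Lemma wmin_eq w m : m \in w -> (forall y, y \in w -> m <= y) -> wmin w = m.
Proof.
move=> Hm Hle; apply/eqP; rewrite eqn_leq wmin_le // Hle //.
by apply: wmin_in; case: w Hm {Hle}.
Qed.

Lemma take_drop_index (s : seq nat) m : m \in s ->
  take (index m s) s ++ m :: drop (index m s).+1 s = s.
Proof.
move=> Hm; have Hi : index m s < size s by rewrite index_mem.
by rewrite -{2}(nth_index 0 Hm) -drop_nth // cat_take_drop.
Qed.

Lemma psi_fS k w : w != [::] -> psi_f k.+1 w =
  LNode (wmin w) (psi_f k (take (index (wmin w) w) w)) (psi_f k (drop (index (wmin w) w).+1 w)).
Proof. by case: w. Qed.

Lemma size_take_index (w : seq nat) k m : m \in w -> size w <= k.+1 ->
  size (take (index m w) w) <= k /\ size (drop (index m w).+1 w) <= k.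
Proof.
move=> Hm Hs; have Hi : index m w < size w by rewrite index_mem.
rewrite size_take size_drop Hi; lia.
Qed.

Lemma inorder_psi k w : size w <= k -> inorder (psi_f k w) = w.
Proof.
elim: k w => [|k IH] w Hs; first by case: w Hs.
case: (altP (w =P [::])) => [->//|Hw].
have Hm := wmin_in Hw.
have [H1 H2] := size_take_index Hm Hs.
by rewrite psi_fS //= !IH // take_drop_index.
Qed.

Fixpoint heap (t : ltree) : bool :=
  if t is LNode x l r then
    all (fun y => x < y) (inorder l ++ inorder r) && heap l && heap r
  else true.

Lemma heap_psi k w : uniq w -> size w <= k -> heap (psi_f k w).
Proof.
elim: k w => [|k IH] w Hu Hs; first by case: w Hs Hu.
case: (altP (w =P [::])) => [->//|Hw].
have Hm := wmin_in Hw.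
have [H1 H2] := size_take_index Hm Hs.
set m := wmin w in Hm *.
have Ew := take_drop_index Hm.
have Hu' := Hu; rewrite -Ew in Hu'.
rewrite psi_fS //= !inorder_psi // IH ?IH ?andbT //.
2: by move: Hu'; rewrite cat_uniq /= => /and3P[_ _ /andP[]].
2: by move: Hu'; rewrite cat_uniq => /andP[].
apply/allP => y Hy.
have Hyw : y \in w by rewrite -Ew mem_cat inE; move: Hy; rewrite mem_cat => /orP[]->; rewrite ?orbT.
rewrite ltn_neqAle wmin_le // andbT.
apply/eqP => Emy; move: Hu'; rewrite uniq_catC /= mem_cat negb_or => /andP[/andP[Hn1 Hn2] _].
by move: Hy; rewrite mem_cat -Emy (negbTE Hn1) (negbTE Hn2).
Qed.

Lemma heapE x l r : heap (LNode x l r) =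
  [&& all (fun y => x < y) (inorder l ++ inorder r), heap l & heap r].
Proof. by rewrite /= andbA. Qed.



Lemma wmin_heap x l r : heap (LNode x l r) -> wmin (inorder (LNode x l r)) = x.
Proof.
move=> /= /andP[/andP[Ha _] _]; apply: wmin_eq; first by rewrite mem_cat inE eqxx orbT.
move=> y; rewrite mem_cat inE orbCA => /orP[/eqP->//|Hy].
by apply: ltnW; move/allP: Ha; apply; rewrite mem_cat.
Qed.

Lemma index_heap x l r : heap (LNode x l r) ->
  index x (inorder (LNode x l r)) = size (inorder l).
Proof.
move=> /= /andP[/andP[Ha _] _]; rewrite index_cat.
have -> : (x \in inorder l) = false.
  apply/negP => Hx; move/allP: Ha => /(_ x); rewrite mem_cat Hx ltnn => /(_ isT) //.
by rewrite /= eqxx addn0.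
Qed.

Lemma drop_after (a b : seq nat) x : drop (size a).+1 (a ++ x :: b) = b.
Proof. by rewrite -cat_rcons drop_size_cat // size_rcons. Qed.

Lemma psi_inorder k t : heap t -> size (inorder t) <= k -> psi_f k (inorder t) = t.
Proof.
elim: t k => [|x l IHl r IHr] k //=; first by case: k.
move=> Hh Hs; case: k Hs => [|k] Hs; first by rewrite size_cat /= addnS in Hs.
have Hh' : heap (LNode x l r) by [].
have Hne : inorder l ++ x :: inorder r != [::] by case: (inorder l).
rewrite psi_fS // (wmin_heap Hh') (index_heap Hh').
rewrite take_size_cat // drop_after.
move: Hh => /andP[/andP[_ H1] H2].
rewrite IHl ?IHr //; move: Hs; rewrite size_cat /=; lia.
Qed.

Lemma inorder_lmap g t : inorder (lmap g t) = map g (inorder t).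
Proof. by elim: t => //= x l -> r ->; rewrite map_cat. Qed.

Lemma shape_lmap g t : Defs.shape (lmap g t) = Defs.shape t.
Proof. by elim: t => //= x l -> r ->. Qed.

Lemma lmap_eq_in g h t : {in inorder t, g =1 h} -> lmap g t = lmap h t.
Proof.
elim: t => //= x l IHl r IHr H.
rewrite (H x) ?mem_cat ?inE ?eqxx ?orbT // IHl ?IHr // => y Hy; apply: H;
  by rewrite mem_cat inE Hy ?orbT.
Qed.

Fixpoint andT (t : ltree) : bool :=
  if t is LNode _ l r then
    [&& andT l, andT r &
     match l, r with
     | LLeaf, _ => true
     | LNode y _ _, LNode z _ _ => z < y
     | _, _ => false
     end]
  else true.

Lemma andre_inorder k t : heap t -> uniq (inorder t) -> size (inorder t) <= k ->
  andre_f k (inorder t) = andT t.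
Proof.
elim: t k => [|x l IHl r IHr] k; first by case: k.
move=> Hh Hu Hs; case: k Hs => [|k] Hs; first by rewrite /= size_cat /= addnS in Hs.
have Hh' := Hh; move: Hh => /= /andP[/andP[Ha Hl] Hr].
move: Hu => /=; rewrite cat_uniq /= => /and3P[Ul Hd /andP[Hx Ur]].
rewrite /=; case: ifP => Hs1.
  case: l r {IHl IHr Hl Hr Ha Hd Hh' Ul Ur Hx Hs} Hs1 => [|y l1 l2] [|z r1 r2] //=;
    rewrite !size_cat /= => Hs1; lia.
have Hne : inorder l ++ x :: inorder r != [::] by case: (inorder l).
rewrite (wmin_heap Hh') (index_heap Hh') take_size_cat // drop_after.
have Hsz : size (inorder l) <= k /\ size (inorder r) <= k by move: Hs => /=; rewrite size_cat /=; lia.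
rewrite IHl ?IHr //; try tauto.
congr (_ && (_ && _)).
case: l r Hl Hr Ha Hd Hs1 {IHl IHr Hh' Ul Ur Hx Hs Hsz Hne} => [|y l1 l2] [|z r1 r2] Hl Hr Ha Hd Hs1 //.
- by rewrite cat0s wmin_in //=; case: (inorder r1).
- have Hy : wmin (inorder (LNode y l1 l2)) = y by apply: wmin_heap.
  have Hz : wmin (inorder (LNode z r1 r2)) = z by apply: wmin_heap.
  have Hyl : y \in inorder (LNode y l1 l2) by rewrite /= mem_cat inE eqxx orbT.
  have Hzr : z \in inorder (LNode z r1 r2) by rewrite /= mem_cat inE eqxx orbT.
  have Hyz : y != z.
    apply/eqP => E; move/negP: Hd; apply; apply/orP; right; apply/hasP; exists z => //.
    by rewrite /= -E.
  have Lz : forall u, u \in inorder (LNode z r1 r2) -> z <= u.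
    by move=> u Hu; rewrite -Hz; apply: wmin_le.
  have Ly : forall u, u \in inorder (LNode y l1 l2) -> y <= u.
    by move=> u Hu; rewrite -Hy; apply: wmin_le.
  case: (ltngtP z y) => Hc.
  + rewrite (@wmin_eq _ z) //; first by rewrite mem_cat Hzr orbT.
    move=> u; rewrite mem_cat => /orP[/Ly|/Lz]; lia.
  + rewrite (@wmin_eq _ y); last first.
      move=> u; rewrite mem_cat => /orP[/Ly|/Lz]; lia.
      by rewrite mem_cat Hyl.
    apply/negP => /Lz; lia.
  + by move: Hyz; rewrite Hc eqxx.
Qed.

Lemma nth_cat_size (A s : seq nat) k : nth 0 (A ++ s) (size A + k) = nth 0 s k.
Proof. by rewrite nth_cat ltnNge leq_addr /= addKn. Qed.

Lemma has_dd_mid (A B : seq nat) a b c : b < a -> c < b -> has_dd (A ++ [:: a, b, c & B]).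
Proof.
move=> H1 H2; apply/hasP; exists (size A).
  by rewrite mem_iota add0n size_cat /=; lia.
have E0 := nth_cat_size A [:: a, b, c & B] 0.
have E1 := nth_cat_size A [:: a, b, c & B] 1.
have E2 := nth_cat_size A [:: a, b, c & B] 2.
rewrite addn0 in E0; rewrite addn1 in E1; rewrite addn2 in E2.
by rewrite E0 E1 E2 /= H1 H2.
Qed.

Lemma filter_none (s : seq nat) y : all (fun u => y < u) s -> [seq u <- s | u <= y] = [::].
Proof. by elim: s => //= a s IH /andP[H1 H2]; rewrite leqNgt H1 /= IH. Qed.

Lemma url_okE a b : url_ok (BNode a b) -> url_ok a && url_ok b.
Proof. by case: a => [|? ?] ; case: b. Qed.

Lemma ctx_andT (sigma : seq nat) : uniq sigma ->
  (forall k, k \in sigma -> ~~ has_dd [seq x <- sigma | x <= k]) ->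
  forall t P q Q, sigma = P ++ inorder t ++ q :: Q -> heap t -> url_ok (Defs.shape t) ->
  all (fun y => q < y) (inorder t) -> andT t.
Proof.
move=> Hu Hdd; elim => [//|x l IHl r IHr] P q Q Es Hh Hurl Hq.
have Hh' := Hh; move: Hh => /= /andP[/andP[Ha Hl] Hr].
have /andP[Ul Ur] := url_okE Hurl.
have Hqx : q < x by move/allP: Hq; apply; rewrite /= mem_cat inE eqxx orbT.
rewrite /= (IHl P x (inorder r ++ q :: Q)) //; last 2 first.
- by rewrite Es /= -catA.
- by apply/allP => y Hy; move/allP: Ha; apply; rewrite mem_cat Hy.
rewrite (IHr (P ++ inorder l ++ [:: x]) q Q) //; last 2 first.
- by rewrite Es /= -!catA.
- by apply/allP => y Hy; move/allP: Hq; apply; rewrite /= mem_cat inE Hy !orbT.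
case: l r Hl Hr Ha Hurl Es {IHl IHr Ul Ur Hh' Hq} => [|y l1 l2] [|z r1 r2] Hl Hr Ha Hurl Es //=.
case: (ltngtP z y) => Hc //.
- exfalso.
  move: Hl Hr => /= /andP[/andP[Hal _] _] /andP[/andP[Har _] _].
  have Hxy : x < y by move/allP: Ha; apply; rewrite /= !(mem_cat, inE, eqxx, orbT).
  have Hys : y \in sigma by rewrite Es /= !(mem_cat, inE, eqxx, orbT).
  have Hr1 : all (fun u => y < u) (inorder r1).
    apply/allP => u Hu0; have : z < u by move/allP: Har; apply; rewrite mem_cat Hu0.
    lia.
  have Hr2 : all (fun u => y < u) (inorder r2).
    apply/allP => u Hu0; have : z < u by move/allP: Har; apply; rewrite mem_cat Hu0 orbT.
    lia.
  have Hl1 : all (fun u => y < u) (inorder l1) by apply/allP => u Hu0; move/allP: Hal; apply; rewrite mem_cat Hu0.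
  have Hl2 : all (fun u => y < u) (inorder l2) by apply/allP => u Hu0; move/allP: Hal; apply; rewrite mem_cat Hu0 orbT.
  move: (Hdd y Hys); rewrite Es /=.
  rewrite !filter_cat /= (filter_none Hl1) (filter_none Hl2) leqnn (ltnW Hxy) /=.
  rewrite filter_cat /= (filter_none Hr1) (filter_none Hr2) leqNgt Hc /=.
  rewrite (ltnW (ltn_trans Hqx Hxy)).
  by rewrite has_dd_mid //; lia.
- exfalso; move: Hu; rewrite Es cat_uniq => /and3P[_ _]; rewrite cat_uniq => /and3P[H _ _]; move: H.
  rewrite [inorder (LNode x _ _)]/= cat_uniq => /and3P[_ /negP H _]; apply: H.
  apply/orP; right; apply/hasP; exists y; first by rewrite -Hc !(mem_cat, inE, eqxx, orbT).
  by rewrite /= !(mem_cat, inE, eqxx, orbT).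
Qed.

Lemma heap_succ t : heap t -> heap (lmap Nat.succ t).
Proof.
elim: t => //= x l IHl r IHr /andP[/andP[Ha Hl] Hr].
rewrite IHl // IHr // !andbT.
rewrite !inorder_lmap -map_cat all_map; apply/allP => y Hy /=.
by move/allP: Ha => /(_ y Hy).
Qed.

Lemma andT_succ t : andT (lmap Nat.succ t) = andT t.
Proof.
elim: t => //= x l -> r ->; congr [&& _, _ & _].
by case: l => [|? ? ?]; case: r => [|? ? ?].
Qed.

Lemma rspine_sub t y : y \in rspine t -> y \in inorder t.
Proof.
elim: t => //= x l _ r IH; rewrite inE => /orP[/eqP->|/IH H].
  by rewrite mem_cat inE eqxx orbT.
by rewrite mem_cat inE H !orbT.
Qed.

Lemma OL_notin R x : x \notin R -> omega_lab R x = x.+1.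
Proof. by rewrite /omega_lab => /negbTE ->. Qed.

Lemma OL_nth R j : uniq R -> j.+1 < size R -> omega_lab R (nth 0 R j.+1) = (nth 0 R j).+1.
Proof. by move=> Hu Hj; rewrite /omega_lab mem_nth // index_uniq. Qed.

Lemma OL_0 R : R != [::] -> omega_lab R (nth 0 R 0) = 1.
Proof. by case: R => //= x R _; rewrite /omega_lab inE eqxx /= eqxx. Qed.

Lemma uniq_rspine t : uniq (inorder t) -> uniq (rspine t).
Proof.
elim: t => //= x l' _ r' IH; rewrite cat_uniq /= => /and3P[_ H6 /andP[H7 H8]].
by rewrite IH // andbT; apply/negP => /rspine_sub; apply/negP.
Qed.

Lemma uniq_sub (S A B : seq nat) : uniq (S ++ A) -> {subset B <= A} -> uniq B -> uniq (S ++ B).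
Proof.
rewrite !cat_uniq => /and3P[-> H1 _] HB -> /=; rewrite andbT.
apply/hasPn => y /HB Hy; by move/hasPn: H1 => /(_ y Hy).
Qed.

Lemma uniq_disj (A B : seq nat) y : uniq (A ++ B) -> y \in A -> y \in B -> False.
Proof. by rewrite cat_uniq => /and3P[_ /hasPn H _] HA HB; move: (H y HB); rewrite /= HA. Qed.

Lemma spine_walk (sigma : seq nat) : uniq sigma -> 0 \notin sigma ->
  (forall k, k \in sigma -> ~~ has_dd [seq x <- sigma | x <= k]) ->
  forall t R S P, R = S ++ rspine t ->
  sigma = P ++ inorder t -> heap t -> uniq (S ++ inorder t) -> url_ok (Defs.shape t) ->
  (forall s y, s \in S -> y \in inorder t -> s < y) ->
  heap (lmap (omega_lab R) t) && andT (lmap (omega_lab R) t).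
Proof.
move=> Hu H0 Hdd; elim => [//|v l _ r IHr] R S P ER Es Hh HuS Hurl HS.
set g := omega_lab R.
have Hh' := Hh; move: Hh => /= /andP[/andP[Ha Hl] Hr].
have /andP[Ul Ur] := url_okE Hurl.
have HuR : uniq R.
  rewrite ER; apply: (uniq_sub HuS); first exact: rspine_sub.
  by apply: uniq_rspine; move: HuS; rewrite cat_uniq => /and3P[].
have Ut : uniq (inorder l ++ v :: inorder r) by move: HuS; rewrite cat_uniq => /and3P[].
have ERv : R = S ++ v :: rspine r by rewrite ER.
have Ev : nth 0 R (size S) = v by rewrite ERv -[size S]addn0 nth_cat_size.
have Hvs : v \in sigma by rewrite Es /= !(mem_cat, inE, eqxx, orbT).
have Hv : g v <= v.
  case ES: (size S) => [|j].
    move: ES => /size0nil ES; rewrite /g -{1}Ev ES /= OL_0; last by rewrite ERv ES.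
    by rewrite lt0n; apply/eqP => E; rewrite -E Hvs in H0.
  have Hj : j.+1 < size R by rewrite ERv size_cat ES /= addSn ltnS addnS ltnS leq_addr.
  rewrite /g -{1}Ev ES OL_nth //.
  have Hj' : j < size S by rewrite ES.
  rewrite ERv nth_cat Hj'; apply: HS; first by apply: mem_nth.
  by rewrite /= !(mem_cat, inE, eqxx, orbT).
have Hnot : forall y, y \in inorder l -> y \notin R.
  move=> y Hy; rewrite ERv mem_cat inE; apply/negP => /orP[HyS|/orP[/eqP Eyv|Hyr]].
  - by apply: (uniq_disj HuS HyS); rewrite /= !(mem_cat, Hy).
  - by apply: (uniq_disj Ut Hy); rewrite Eyv inE eqxx.
  - by apply: (uniq_disj Ut Hy); rewrite inE (rspine_sub Hyr) orbT.
have Hlg : lmap g l = lmap Nat.succ l.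
  apply: lmap_eq_in => y Hy; exact: OL_notin (Hnot y Hy).
have Hrg : forall y, y \in inorder r -> v < g y.
  move=> y Hy; case: (boolP (y \in R)) => HyR; last first.
    rewrite /g OL_notin //; apply: ltnW; rewrite ltnS.
    by move/allP: Ha; apply; rewrite mem_cat Hy orbT.
  have Hyr : y \in rspine r.
    move: HyR; rewrite ERv mem_cat inE => /orP[HyS|/orP[/eqP Eyv|//]].
    - by exfalso; apply: (uniq_disj HuS HyS); rewrite /= !(mem_cat, inE, Hy, orbT).
    - by exfalso; move: Ut; rewrite cat_uniq /= => /and3P[_ _ /andP[/negP H _]]; apply: H; rewrite -Eyv.
  set i := index y (rspine r).
  have Hi : i < size (rspine r) by rewrite index_mem.
  have Ey : nth 0 R (size S + i).+1 = y.
    by rewrite -addnS ERv nth_cat_size /= nth_index.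
  have Hsz : (size S + i).+1 < size R by rewrite ERv size_cat /= -addnS ltn_add2l ltnS.
  rewrite -Ey /g OL_nth // ERv nth_cat_size ltnS.
  have : nth 0 (v :: rspine r) i \in v :: rspine r by apply: mem_nth; rewrite /= ltnS ltnW.
  rewrite inE => /orP[/eqP->//|/rspine_sub Hz].
  by apply: ltnW; move/allP: Ha; apply; rewrite mem_cat Hz orbT.
have HandL : andT l.
  apply: (ctx_andT Hu Hdd (P := P) (q := v) (Q := inorder r)) => //.
  by apply/allP => y Hy; move/allP: Ha; apply; rewrite mem_cat Hy.
have /andP[IH1 IH2] : heap (lmap g r) && andT (lmap g r).
  apply: (IHr R (rcons S v) (P ++ inorder l ++ [:: v])) => //.
  - by rewrite ERv cat_rcons.
  - by rewrite Es /= -!catA.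
  - rewrite cat_rcons; apply: (uniq_sub HuS).
    + by move=> y; rewrite /= mem_cat => ->; rewrite orbT.
    + by move: Ut; rewrite cat_uniq => /and3P[].
  - move=> s y; rewrite mem_rcons inE => /orP[/eqP->|Hs] Hy.
    + by move/allP: Ha; apply; rewrite mem_cat Hy orbT.
    + by apply: HS => //; rewrite /= mem_cat inE Hy !orbT.
rewrite /= Hlg (heap_succ Hl) andT_succ HandL IH1 IH2 /= !andbT.
apply/andP; split.
  rewrite !inorder_lmap all_cat !all_map; apply/andP; split; apply/allP => y Hy /=.
  - have : v < y by move/allP: Ha; apply; rewrite mem_cat Hy.
    by move=> H; apply: leq_ltn_trans Hv _; apply: ltnW.
  - by apply: leq_ltn_trans Hv (Hrg y Hy).
case El: l Hurl Ha => [|y l1 l2] Hurl Ha //=.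
case Er: r Hurl Ha => [|z r1 r2] Hurl Ha //=.
have Ez : g z = v.+1.
  have Hz : nth 0 R (size S).+1 = z by rewrite ERv Er -addn1 nth_cat_size.
  have Hsz : (size S).+1 < size R by rewrite ERv Er size_cat /= !addnS !ltnS leq_addr.
  by rewrite -Hz /g OL_nth // Ev.
rewrite Ez ltnS; move/allP: Ha; apply; by rewrite /= !(mem_cat, inE, eqxx, orbT).
Qed.

Lemma sorted_rspine t : heap t -> sorted ltn (rspine t).
Proof.
elim: t => //= x l _ r IH /andP[/andP[Ha _] Hr].
rewrite (path_sortedE ltn_trans) IH // andbT; apply/allP => y /rspine_sub Hy.
by move/allP: Ha; apply; rewrite mem_cat Hy orbT.
Qed.

Lemma last_rspine t d : last d (inorder t) \in d :: rspine t.
Proof.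
elim: t d => [|x l _ r IH] d /=; first by rewrite inE eqxx.
rewrite last_cat /=; have := IH x; rewrite !inE => /orP[->|->]; by rewrite ?orbT.
Qed.

Section IdxFacts.
Variables (a b : seq nat) (x : nat).
Hypothesis Hu : uniq (a ++ x :: b).

Lemma idx_a z : z \in a -> index z (a ++ x :: b) = index z a.
Proof. by move=> Hz; rewrite index_cat Hz. Qed.

Lemma x_notin_a : x \notin a.
Proof. by apply/negP => Hx; apply: (uniq_disj Hu Hx); rewrite inE eqxx. Qed.

Lemma x_notin_b : x \notin b.
Proof. by move: Hu; rewrite cat_uniq /= => /and3P[_ _ /andP[]]. Qed.

Lemma idx_x : index x (a ++ x :: b) = size a.
Proof. by rewrite index_cat (negbTE x_notin_a) /= eqxx addn0. Qed.

Lemma idx_b z : z \in b -> index z (a ++ x :: b) = size a + (index z b).+1.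
Proof.
move=> Hz; have Hza : z \notin a by apply/negP => Ha; apply: (uniq_disj Hu Ha); rewrite inE Hz orbT.
have Hzx : (x == z) = false by apply/negbTE; apply/eqP => E; move: x_notin_b; rewrite E Hz.
by rewrite index_cat (negbTE Hza) /= Hzx.
Qed.

Lemma idx_lt_a z : z \in a -> index z (a ++ x :: b) < size a.
Proof. by move=> Hz; rewrite idx_a // index_mem. Qed.

Lemma after_x z : z \in a ++ x :: b -> size a <= index z (a ++ x :: b) -> z \in b \/ z = x.
Proof.
rewrite mem_cat inE => /orP[Hz|/orP[/eqP->|Hz]]; [|by right|by left].
by rewrite leqNgt idx_lt_a.
Qed.
End IdxFacts.

Section TreeFacts.

Lemma F1 t v y : heap t -> uniq (inorder t) -> v \in rspine t -> y \in inorder t ->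
  index v (inorder t) < index y (inorder t) -> v < y.
Proof.
elim: t v y => //= x l _ r IH v y /andP[/andP[Ha _] Hr] Hu Hv Hy Hi.
have Hur : uniq (inorder r) by move: Hu; rewrite cat_uniq /= => /and3P[_ _ /andP[]].
move: Hv; rewrite inE => /orP[/eqP Ev|Hv].
- subst v; rewrite (idx_x Hu) in Hi.
  case: (after_x Hy (ltnW Hi)) => [Hyb|Ey].
  + by move/allP: Ha; apply; rewrite mem_cat Hyb orbT.
  + by move: Hi; rewrite Ey (idx_x Hu) ltnn.
- have Hvb := rspine_sub Hv.
  rewrite (idx_b Hu Hvb) in Hi.
  have Hle : size (inorder l) <= index y (inorder l ++ x :: inorder r) by move: Hi; lia.
  case: (after_x Hy Hle) => [Hyb|Ey].
  + apply: IH => //; move: Hi; rewrite (idx_b Hu Hyb); lia.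
  + by move: Hi; rewrite Ey (idx_x Hu); lia.
Qed.

Lemma F2 t j y : heap t -> uniq (inorder t) -> j.+1 < size (rspine t) -> y \in inorder t ->
  index (nth 0 (rspine t) j) (inorder t) < index y (inorder t) -> nth 0 (rspine t) j.+1 <= y.
Proof.
elim: t j y => //= x l _ r IH j y /andP[/andP[Ha _] Hr] Hu Hj Hy Hi.
case: j Hj Hi => [|j] Hj Hi /=.
- rewrite (idx_x Hu) in Hi.
  case: (after_x Hy (ltnW Hi)) => [Hyb|Ey]; last by move: Hi; rewrite Ey (idx_x Hu) ltnn.
  case: r Hr Hu Hj Ha Hyb {IH Hy Hi} => [//|z r1 r2] Hr Hu Hj Ha Hyb /=.
  move: Hyb; rewrite /= mem_cat inE => /orP[Hy|/orP[/eqP->//|Hy]].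
  + by move: Hr => /= /andP[/andP[Hr _] _]; apply: ltnW; move/allP: Hr; apply; rewrite mem_cat Hy.
  + by move: Hr => /= /andP[/andP[Hr _] _]; apply: ltnW; move/allP: Hr; apply; rewrite mem_cat Hy orbT.
- have Hjr : j < size (rspine r) by move: Hj; rewrite ltnS; apply: ltnW.
  have Hvb : nth 0 (rspine r) j \in inorder r by apply: rspine_sub; apply: mem_nth.
  rewrite (idx_b Hu Hvb) in Hi.
  have Hur : uniq (inorder r) by move: Hu; rewrite cat_uniq /= => /and3P[_ _ /andP[]].
  have Hle : size (inorder l) <= index y (inorder l ++ x :: inorder r) by move: Hi; lia.
  case: (after_x Hy Hle) => [Hyb|Ey].
  + apply: IH => //; move: Hi; rewrite (idx_b Hu Hyb); lia.
  + by move: Hi; rewrite Ey (idx_x Hu); lia.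
Qed.

Lemma F3 t y : heap t -> uniq (inorder t) -> y \in inorder t -> y \notin rspine t ->
  exists v, [/\ v \in rspine t, index y (inorder t) < index v (inorder t) & v < y].
Proof.
elim: t y => //= x l _ r IH y /andP[/andP[Ha _] Hr] Hu Hy HyR.
have Hur : uniq (inorder r) by move: Hu; rewrite cat_uniq /= => /and3P[_ _ /andP[]].
move: HyR; rewrite inE negb_or => /andP[Hyx HyR].
move: Hy; rewrite mem_cat inE => /orP[Hya|/orP[Hyx'|Hyb]].
- exists x; split; first by rewrite inE eqxx.
  + by rewrite (idx_x Hu) idx_lt_a.
  + by move/allP: Ha; apply; rewrite mem_cat Hya.
- by move: Hyx; rewrite Hyx'.
- have [v [Hv Hi Hvy]] := IH y Hr Hur Hyb HyR.
  exists v; split => //; first by rewrite inE Hv orbT.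
  by rewrite (idx_b Hu Hyb) (idx_b Hu (rspine_sub Hv)); lia.
Qed.

End TreeFacts.

Lemma index_map_in (f : nat -> nat) (s : seq nat) x : {in s &, injective f} -> x \in s ->
  index (f x) (map f s) = index x s.
Proof.
elim: s => //= y s IH Hinj; rewrite inE => /orP[/eqP->|Hx]; first by rewrite !eqxx.
case: (eqVneq y x) => [->|Hyx]; first by rewrite eqxx.
have -> : (f y == f x) = false.
  apply/negbTE/eqP => E; move: Hyx; rewrite (Hinj y x) ?eqxx ?inE ?eqxx ?Hx ?orbT //.
rewrite IH // => a b Ha Hb; apply: Hinj; by rewrite inE ?Ha ?Hb orbT.
Qed.

Lemma sumn_succ (s : seq nat) : sumn [seq i.+1 | i <- s] = sumn s + size s.
Proof. by elim: s => //= a s ->; lia. Qed.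

Lemma sumn_add (s : seq nat) (f h : nat -> nat) :
  sumn [seq f i + h i | i <- s] = sumn (map f s) + sumn (map h s).
Proof. by elim: s => //= a s ->; lia. Qed.

Lemma count_nth_iota (s : seq nat) (P : pred nat) :
  count (fun i => P (nth 0 s i)) (iota 0 (size s)) = count P s.
Proof. by rewrite -[in RHS](mkseq_nth 0 s) /mkseq count_map. Qed.

Section Stats.
Variables (n : nat) (sigma R : seq nat).
Hypothesis Hn : 0 < n.
Hypothesis Hperm : perm_eq sigma (iota 1 n).
Hypothesis HsR : sorted ltn R.
Hypothesis HRs : {subset R <= sigma}.
Hypothesis HR0 : nth 0 R 0 = 1.
Hypothesis HnR : n \in R.
Hypothesis HF1 : forall v y, v \in R -> y \in sigma -> index v sigma < index y sigma -> v < y.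
Hypothesis HF2 : forall j y, j.+1 < size R -> y \in sigma ->
  index (nth 0 R j) sigma < index y sigma -> nth 0 R j.+1 <= y.
Hypothesis HF3 : forall y, y \in sigma -> y \notin R ->
  exists v, [/\ v \in R, index y sigma < index v sigma & v < y].

Local Notation g := (omega_lab R).

Lemma Hus : uniq sigma.
Proof. by rewrite (perm_uniq Hperm) iota_uniq. Qed.

Lemma Hmem x : (x \in sigma) = (0 < x <= n).
Proof. by rewrite (perm_mem Hperm) mem_iota add1n ltnS. Qed.

Lemma Hsz : size sigma = n.
Proof. by rewrite (perm_size Hperm) size_iota. Qed.

Lemma HuR : uniq R.
Proof. exact: (sorted_uniq ltn_trans ltnn). Qed.

Lemma HRne : 0 < size R.
Proof. by case: R HnR. Qed.

Lemma Rmem x : x \in R -> 0 < x <= n.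
Proof. by move=> /HRs; rewrite Hmem. Qed.

Lemma Rmono i j : i < size R -> j < size R -> (nth 0 R i < nth 0 R j) = (i < j).
Proof.
move=> Hi Hj; case: (ltnP i j) => Hij.
  by apply: (sorted_ltn_nth ltn_trans) => //.
have HsR' : sorted leq R by apply: sub_sorted HsR => a b /ltnW.
by apply/negbTE; rewrite -leqNgt; apply: (sorted_leq_nth leq_trans leqnn) => //.
Qed.

Lemma R_cases x : x \in R -> (x = 1 /\ g x = 1) \/
  exists j, [/\ j.+1 < size R, x = nth 0 R j.+1 & g x = (nth 0 R j).+1].
Proof.
move=> Hx; have Hi : index x R < size R by rewrite index_mem.
case E: (index x R) Hi => [|j] Hi.
- left; have Ex : x = nth 0 R 0 by rewrite -E nth_index.
  by split; [rewrite Ex HR0 | rewrite Ex OL_0 //; case: R HnR].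
- right; exists j; have Ex : x = nth 0 R j.+1 by rewrite -E nth_index.
  by split => //; rewrite Ex OL_nth // HuR.
Qed.

Lemma gN x : x \notin R -> g x = x.+1.
Proof. exact: OL_notin. Qed.

Lemma g_le x : x \in R -> g x <= x.
Proof.
case/R_cases => [[-> ->] //|[j [Hj -> ->]]].
by rewrite Rmono //; apply: ltnW.
Qed.

Lemma g_R_lt x y : x \in R -> y \in R -> (g x < g y) = (x < y).
Proof.
move=> Hx Hy.
have Hpos : forall j, j < size R -> 0 < nth 0 R j by move=> j Hj; case/andP: (Rmem (mem_nth 0 Hj)).
have H1 : forall j, j.+1 < size R -> 1 < nth 0 R j.+1.
  by move=> j Hj; rewrite -HR0 Rmono // (ltn_trans _ Hj).
case: (R_cases Hx) => [[-> ->]|[j [Hj -> ->]]]; case: (R_cases Hy) => [[-> ->]|[k [Hk -> ->]]] //.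
- by rewrite ltnS Hpos ?H1 // (ltn_trans _ Hk).
- by have := Hpos _ Hj; case: (nth 0 R j.+1).
- by rewrite ltnS (Rmono (ltnW Hj) (ltnW Hk)) (Rmono Hj Hk).
Qed.

Lemma ginj : {in sigma &, injective g}.
Proof.
have Hpos : forall j, j < size R -> 0 < nth 0 R j by move=> j Hj; case/andP: (Rmem (mem_nth 0 Hj)).
have key : forall x y, x \in sigma -> x \notin R -> y \in R -> g x = g y -> False.
  move=> x y Hx HxR Hy; rewrite gN //.
  case: (R_cases Hy) => [[_ ->]|[j [Hj _ ->]]].
  - by case: x Hx {HxR} => //; rewrite Hmem.
  - by case => E; move: HxR; rewrite E mem_nth // ltnW.
move=> x y Hx Hy; case: (boolP (x \in R)) => HxR; case: (boolP (y \in R)) => HyR.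
- move=> E; case: (R_cases HxR) E => [[-> ->]|[j [Hj -> ->]]];
    case: (R_cases HyR) => [[-> ->]|[k [Hk -> ->]]] //.
  + by case=> E; move: (Hpos k (ltnW Hk)); rewrite -E.
  + by case=> E; move: (Hpos j (ltnW Hj)); rewrite E.
  + by case=> /eqP; rewrite nth_uniq ?HuR ?(ltnW Hj) ?(ltnW Hk) // => /eqP ->.
- by move=> E; exfalso; apply: (key y x) => //.
- by move=> E; exfalso; apply: (key x y).
- by rewrite !gN //; case.
Qed.

Lemma grange x : x \in sigma -> 0 < g x <= n.
Proof.
move=> Hx; case: (boolP (x \in R)) => HxR.
  case: (R_cases HxR) => [[_ ->]//|[j [Hj Ex ->]]].
  have := Rmem (mem_nth 0 Hj); rewrite -Ex => /andP[_ Hxn].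
  by apply: leq_trans Hxn; rewrite Ex Rmono // (ltnW Hj).
rewrite gN //=; move: Hx; rewrite Hmem => /andP[_]; rewrite leq_eqVlt => /orP[/eqP E|//].
by move: HxR; rewrite E HnR.
Qed.

Lemma perm_tau : perm_eq (map g sigma) (iota 1 n).
Proof.
have Hu : uniq (map g sigma) by rewrite (map_inj_in_uniq ginj) Hus.
apply: uniq_perm => //; first exact: iota_uniq.
have Hsub : {subset map g sigma <= iota 1 n}.
  move=> y /mapP[x Hx ->]; rewrite mem_iota add1n ltnS; exact: grange.
have Hsz' : size (iota 1 n) <= size (map g sigma) by rewrite size_map Hsz size_iota.
by have [_ E] := uniq_min_size Hu Hsub Hsz'.
Qed.

Lemma idx_tau x : x \in sigma -> index (g x) (map g sigma) = index x sigma.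
Proof. by move=> Hx; apply: index_map_in => //; exact: ginj. Qed.

Definition nx v := nth 0 R (index v R).+1.

Lemma nx_props v : v \in R -> v < n ->
  [/\ (index v R).+1 < size R, nx v \in R, v < nx v, g (nx v) = v.+1 &
      forall u, u \in R -> v < u -> nx v <= u].
Proof.
move=> Hv Hvn.
have Hi : index v R < size R by rewrite index_mem.
have Hin : index n R < size R by rewrite index_mem.
have Hlt : index v R < index n R by rewrite -Rmono // !nth_index.
have Hj : (index v R).+1 < size R by apply: leq_ltn_trans Hin.
split => //.
- exact: mem_nth.
- by rewrite /nx -{1}(nth_index 0 Hv) Rmono.
- by rewrite /nx OL_nth ?HuR // nth_index.
- move=> u Hu Hvu; have Hiu : index u R < size R by rewrite index_mem.
  have Hlt' : index v R < index u R by rewrite -Rmono // !nth_index.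
  rewrite -(nth_index 0 Hu) /nx; move: Hlt'; rewrite leq_eqVlt => /orP[/eqP->//|H].
  by apply: ltnW; rewrite Rmono.
Qed.

Lemma F2' v y : v \in R -> v < n -> y \in sigma -> index v sigma < index y sigma -> nx v <= y.
Proof.
move=> Hv Hvn Hy Hi; have [Hj _ _ _ _] := nx_props Hv Hvn.
by apply: HF2 => //; rewrite nth_index.
Qed.

Definition pre k := if k \in R then nx k else k.

Lemma pre_props k : 0 < k < n -> pre k \in sigma /\ g (pre k) = k.+1.
Proof.
move=> /andP[Hk0 Hkn]; rewrite /pre; case: ifP => HkR.
- by have [_ H1 _ H2 _] := nx_props HkR Hkn; rewrite H2 (HRs H1).
- by rewrite gN ?HkR // Hmem Hk0 ltnW.
Qed.

Lemma idx_pre k : 0 < k < n -> index k.+1 (map g sigma) = index (pre k) sigma.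
Proof. by move=> Hk; have [H1 <-] := pre_props Hk; rewrite idx_tau. Qed.

Lemma idx_one : index 1 (map g sigma) = index 1 sigma.
Proof.
have H1 : 1 \in R by rewrite -HR0 mem_nth // HRne.
have : g 1 = 1 by rewrite -{1}HR0 OL_0 //; case: R HnR.
by move=> {1}<-; rewrite idx_tau // HRs.
Qed.

Lemma idx_neq x y : x \in sigma -> y \in sigma -> x != y -> index x sigma != index y sigma.
Proof.
move=> Hx Hy Hxy; apply/eqP => E; move/eqP: Hxy; apply.
by rewrite -(nth_index 0 Hx) -(nth_index 0 Hy) E.
Qed.

Lemma pos_tot x y : x \in sigma -> y \in sigma -> x != y ->
  (index x sigma < index y sigma) = ~~ (index y sigma < index x sigma).
Proof.
move=> Hx Hy Hxy; have := idx_neq Hx Hy Hxy.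
case: (ltngtP (index x sigma) (index y sigma)) => //.
Qed.

Lemma QP k : 0 < k -> k.+1 < n ->
  (index (pre k.+1) sigma < index (pre k) sigma) = (index k.+1 sigma < index k sigma).
Proof.
move=> Hk0 Hkn.
have Hkn' : k < n by apply: ltn_trans Hkn.
have Hks : k \in sigma by rewrite Hmem Hk0 ltnW.
have Hk1s : k.+1 \in sigma by rewrite Hmem ltnW.
rewrite /pre; case: (boolP (k \in R)) => HkR; case: (boolP (k.+1 \in R)) => Hk1R /=.
- have [_ Hn1 Hlt1 _ Hmin1] := nx_props HkR Hkn'.
  have [_ Hn2 Hlt2 _ _] := nx_props Hk1R Hkn.
  have -> : nx k = k.+1 by apply/eqP; rewrite eqn_leq Hlt1 Hmin1.
  apply/idP/idP => H.
  + by have := HF1 Hn2 Hk1s H; lia.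
  + by have := HF1 Hk1R Hks H; lia.
- have [_ Hn1 Hlt1 _ Hmin1] := nx_props HkR Hkn'.
  have Hne : nx k != k.+1 by apply/eqP => E; move: Hk1R; rewrite -E Hn1.
  have -> : index k.+1 sigma < index (nx k) sigma.
    have Hne' : k.+1 != nx k by rewrite eq_sym.
    rewrite (pos_tot Hk1s (HRs Hn1) Hne').
    by apply/negP => H; have := HF1 Hn1 Hk1s H; lia.
  have Hne2 : k.+1 != k by rewrite eqn_leq ltnn.
  symmetry; rewrite (pos_tot Hk1s Hks Hne2).
  by apply/negP => H; have := F2' HkR Hkn' Hk1s H; lia.
- have [_ Hn2 Hlt2 _ _] := nx_props Hk1R Hkn.
  have -> : index k.+1 sigma < index k sigma = false.
    by apply/negP => H; have := HF1 Hk1R Hks H; lia.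
  by apply/negP => H; have := HF1 Hn2 Hks H; lia.
- by [].
Qed.

Lemma IDes_tau : IDes (map g sigma) = [seq i.+1 | i <- IDes sigma].
Proof.
rewrite /IDes size_map Hsz.
case En: n => [|[|m]]; first by move: Hn; rewrite En.
  by [].
have H1R : 1 \in R by rewrite -HR0 mem_nth // HRne.
have H1s : 1 \in sigma by rewrite Hmem En.
rewrite [in LHS]/= idx_one.
have -> : index 2 (map g sigma) = index (pre 1) sigma by apply: idx_pre; rewrite En.
have -> : index (pre 1) sigma < index 1 sigma = false.
  have H1n : 1 < n by rewrite En.
  apply/negP => H; have [_ Hn1 Hlt1 _ _] := nx_props H1R H1n.
  by move: H; rewrite /pre H1R => /(HF1 Hn1 H1s); lia.
rewrite (_ : m.+2.-1 = m + 1); last by rewrite addn1.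
rewrite iotaD filter_cat /=.
have Hm1 : m.+1 \in sigma by rewrite Hmem En leqnSn.
have -> : (index (1 + m).+1 sigma < index (1 + m) sigma) = false.
  apply/negP; rewrite add1n -En => /(HF1 HnR Hm1); lia.
rewrite cats0 (iotaDl 1 1 m) filter_map; congr map.
apply: eq_in_filter => k; rewrite mem_iota => /andP[Hk1 Hk2] /=.
rewrite !add1n (idx_pre (k := k.+1)) ?(idx_pre (k := k)) ?QP //; rewrite En; lia.
Qed.

Lemma ides_tau : ides (map g sigma) = ides sigma.
Proof. by rewrite /ides IDes_tau size_map. Qed.

Lemma imaj_tau : imaj (map g sigma) = imaj sigma + ides sigma.
Proof. by rewrite /imaj /ides IDes_tau sumn_succ. Qed.

Definition up x := nth 0 R (find (fun v => x < v) R).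

Lemma up_props x : x < n -> up x \in R /\ x < up x.
Proof.
move=> Hx; have Hh : has (fun v => x < v) R by apply/hasP; exists n.
split; first by rewrite /up mem_nth // -has_find.
exact: (nth_find 0 Hh).
Qed.

Lemma up_eq x j : x \notin R -> j.+1 < size R -> x < nth 0 R j.+1 ->
  (nth 0 R j < x) = (nth 0 R j.+1 == up x).
Proof.
move=> HxR Hj Hxj.
have Hh : has (fun v => x < v) R by apply/hasP; exists (nth 0 R j.+1) => //; exact: mem_nth.
set f := find (fun v => x < v) R.
have Hf : f < size R by rewrite -has_find.
have Hfle : f <= j.+1.
  rewrite leqNgt; apply/negP => H; have := before_find 0 H; rewrite /= Hxj //.
have Hxf : x < nth 0 R f := nth_find 0 Hh.
apply/idP/idP => H.
- have Hjf : j < f.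
    rewrite ltnNge; apply/negP => H'.
    have : nth 0 R f <= nth 0 R j.
      move: H'; rewrite leq_eqVlt => /orP[/eqP->//|H'']; apply: ltnW; rewrite Rmono //.
      exact: ltnW.
    lia.
  by rewrite /up -/f (_ : f = j.+1) //; apply/eqP; rewrite eqn_leq Hfle Hjf.
- move/eqP: H; rewrite /up -/f => /eqP; rewrite nth_uniq ?HuR // => /eqP Ef.
  have Hjlt : j < f by rewrite Ef.
  have := before_find 0 Hjlt; rewrite /= -/f => /negbT; rewrite -leqNgt leq_eqVlt => /orP[/eqP E|//].
  by move: HxR; rewrite -E mem_nth // ltnW.
Qed.

Lemma inv_point x y : x \in sigma -> y \in sigma -> index x sigma < index y sigma ->
  (g y < g x) = (y < x) || ((x \notin R) && (y == up x)).
Proof.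
move=> Hx Hy Hi.
have Hxy : x != y by apply/eqP => E; move: Hi; rewrite E ltnn.
case: (boolP (x \in R)) => HxR; case: (boolP (y \in R)) => HyR /=.
- by rewrite g_R_lt // orbF.
- have Hlt := HF1 HxR Hy Hi.
  have Hg := g_le HxR.
  rewrite (gN HyR) (_ : y < x = false); last by apply/negbTE; rewrite -leqNgt ltnW.
  by apply/negbTE; rewrite -leqNgt; apply: leq_trans Hg _; apply: ltnW; apply: ltnW.
- case: (ltngtP y x) => Hc.
  + rewrite (gN HxR) orTb; have := g_le HyR => H; apply: leq_ltn_trans H _; lia.
  + have Hxn : x < n by have := Rmem HyR; lia.
    case: (R_cases HyR) => [[Ey _]|[j [Hj Ey Eg]]].
      by move: Hc; rewrite Ey; move: Hx; rewrite Hmem; lia.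
    rewrite Eg (gN HxR) ltnS Ey -up_eq // -Ey //.
  + by move: Hxy; rewrite Hc eqxx.
- rewrite (gN HxR) (gN HyR) ltnS.
  have -> : (y == up x) = false.
    apply/negP => /eqP E; have Hxn : x < n.
      move: Hx; rewrite Hmem => /andP[_]; rewrite leq_eqVlt => /orP[/eqP E'|//].
      by move: HxR; rewrite E' HnR.
    by have [Hu _] := up_props Hxn; move: HyR; rewrite E Hu.
  by rewrite orbF.
Qed.

Lemma invE s : inversions s = sumn [seq count (fun j => (i < j) && (nth 0 s j < nth 0 s i))
  (iota 0 (size s)) | i <- iota 0 (size s)].
Proof.
rewrite /inversions count_flatten -map_comp; congr sumn; apply: eq_map => i /=.
by rewrite count_map.
Qed.

Lemma countR : count (mem R) sigma = size R.
Proof.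
rewrite -size_filter; apply: perm_size; apply: uniq_perm.
- by apply: filter_uniq; exact: Hus.
- exact: HuR.
- by move=> x; rewrite mem_filter; apply/andP/idP => [[]//|H]; split => //; exact: HRs.
Qed.

Lemma count_i i : i < n ->
  count (fun j => (i < j) && (g (nth 0 sigma j) < g (nth 0 sigma i))) (iota 0 n) =
  count (fun j => (i < j) && (nth 0 sigma j < nth 0 sigma i)) (iota 0 n) + (nth 0 sigma i \notin R).
Proof.
move=> Hi.
set x := nth 0 sigma i.
have Hx : x \in sigma by rewrite mem_nth // Hsz.
have Hix : index x sigma = i by rewrite index_uniq ?Hus // Hsz.
set a := fun j => (i < j) && (nth 0 sigma j < x).
set b := fun j => (i < j) && ((x \notin R) && (nth 0 sigma j == up x)).
have E : count (fun j => (i < j) && (g (nth 0 sigma j) < g x)) (iota 0 n) = count (predU a b) (iota 0 n).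
  apply: eq_in_count => j; rewrite mem_iota add0n => /andP[_ Hj].
  rewrite /a /b /=; case: (ltnP i j) => Hij //=.
  have Hy : nth 0 sigma j \in sigma by rewrite mem_nth // Hsz.
  have Hiy : index (nth 0 sigma j) sigma = j by rewrite index_uniq ?Hus // Hsz.
  by rewrite inv_point // Hix Hiy.
have E0 : count (predI a b) (iota 0 n) = 0.
  apply/eqP; rewrite -leqn0 leqNgt -has_count; apply/hasPn => j _ /=.
  rewrite /a /b; apply/negP => /andP[/andP[_ H1] /andP[_ /andP[HxR /eqP H2]]].
  have Hxn : x < n.
    move: Hx; rewrite Hmem => /andP[_]; rewrite leq_eqVlt => /orP[/eqP E'|//].
    by move: HxR; rewrite E' HnR.
  by have [_ H3] := up_props Hxn; move: H1; rewrite H2; lia.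
have := count_predUI a b (iota 0 n); rewrite E0 addn0 -E => ->; congr addn.
rewrite /b; case: (boolP (x \in R)) => HxR /=.
  by apply/eqP; rewrite -leqn0 leqNgt -has_count; apply/hasPn => j _ /=; rewrite andbF.
have Hxn : x < n.
  move: Hx; rewrite Hmem => /andP[_]; rewrite leq_eqVlt => /orP[/eqP E'|//].
  by move: HxR; rewrite E' HnR.
have [Hu Hxu] := up_props Hxn.
have Hus' : up x \in sigma by exact: HRs.
have Hpos : i < index (up x) sigma.
  rewrite -Hix (pos_tot Hx Hus'); last by apply/eqP => E'; move: HxR; rewrite E' Hu.
  by apply/negP => H; have := HF1 Hu Hx H; lia.
transitivity (count_mem (up x) sigma); last by rewrite (count_uniq_mem _ Hus) Hus'.
rewrite -(count_nth_iota sigma (pred1 (up x))) Hsz.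
apply: eq_in_count => j; rewrite mem_iota add0n => /andP[_ Hj] /=.
case: (eqVneq (nth 0 sigma j) (up x)) => [E'|] /=; last by rewrite andbF.
rewrite andbT; apply: leq_trans Hpos _; rewrite -E' index_uniq ?Hus ?Hsz //.
Qed.

Lemma inv_tau : inversions (map g sigma) = inversions sigma + (n - size R).
Proof.
rewrite !invE size_map Hsz.
rewrite (_ : [seq count (fun j => (i < j) && (nth 0 (map g sigma) j < nth 0 (map g sigma) i)) (iota 0 n) | i <- iota 0 n] =
  [seq count (fun j => (i < j) && (nth 0 sigma j < nth 0 sigma i)) (iota 0 n) + (nth 0 sigma i \notin R) | i <- iota 0 n]); last first.
  apply/eq_in_map => i; rewrite mem_iota add0n => /andP[_ Hi].
  rewrite -count_i //; apply: eq_in_count => j; rewrite mem_iota add0n => /andP[_ Hj].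
  by rewrite !(nth_map 0) ?Hsz.
rewrite sumn_add; congr addn.
rewrite sumn_count.
have -> : count (fun i => nth 0 sigma i \notin R) (iota 0 n) = count (predC (mem R)) sigma.
  by rewrite -(count_nth_iota sigma (predC (mem R))) Hsz.
have := count_predC (mem R) sigma; rewrite countR Hsz => <-; lia.
Qed.

Lemma RLmin_eq : RLmin sigma = size R.
Proof.
rewrite /RLmin -countR -(count_nth_iota sigma (mem R)) Hsz; apply: eq_in_count => i.
rewrite mem_iota add0n => /andP[_ Hi].
set x := nth 0 sigma i.
have Hx : x \in sigma by rewrite mem_nth // Hsz.
have Hix : index x sigma = i by rewrite index_uniq ?Hus // Hsz.
change (all (fun j => x < nth 0 sigma j) (iota i.+1 (n - i.+1)) = (x \in R)).
case: (boolP (x \in R)) => HxR /=.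
- apply/allP => j; rewrite mem_iota => /andP[Hij Hj].
  have Hjn : j < n by move: Hj; rewrite subnKC.
  apply: HF1 => //; first by rewrite mem_nth // Hsz.
  by rewrite Hix index_uniq ?Hus ?Hsz.
- have [v [Hv Hiv Hvx]] := HF3 Hx HxR.
  apply/negP => /allP /(_ (index v sigma)).
  have Hvs : v \in sigma by exact: HRs.
  rewrite nth_index // mem_iota -Hix Hiv /= subnKC ?index_mem ?Hsz //; last by rewrite Hix.
  have Hvn : index v sigma < n by rewrite -Hsz index_mem.
  by move=> /(_ Hvn); lia.
Qed.

Lemma all_stats :
  [/\ perm_eq (map g sigma) (iota 1 n),
      ides (map g sigma) = ides sigma,
      imaj (map g sigma) = imaj sigma + ides sigma &
      inversions (map g sigma) = inversions sigma + n - RLmin sigma].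
Proof.
split; [exact: perm_tau | exact: ides_tau | exact: imaj_tau |].
rewrite inv_tau RLmin_eq addnBA // -countR -Hsz; exact: count_size.
Qed.

End Stats.

Unset Implicit Arguments.

Theorem proposition4p5 (n : nat) (T : btree) (sigma : seq nat) :
  1 <= n -> URL n T -> RS n T sigma ->
  let tau := Omega sigma in
  [/\ AndII n T tau,
      ides tau = ides sigma,
      imaj tau = imaj sigma + ides sigma &
      inversions tau = inversions sigma + n - RLmin sigma].
Proof.
move=> Hn [HnT Hurl] [[Hperm Hlast Hss] Hshape] tau.
have Hus : uniq sigma by rewrite (perm_uniq Hperm) iota_uniq.
have Hmem : forall x, (x \in sigma) = (0 < x <= n).
  by move=> x; rewrite (perm_mem Hperm) mem_iota add1n ltnS.
have Hsz : size sigma = n by rewrite (perm_size Hperm) size_iota.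
set t0 := Psi sigma.
have Hin : inorder t0 = sigma by rewrite /t0 /Psi inorder_psi.
have Hh : heap t0 by rewrite /t0 /Psi heap_psi.
set R := rspine t0.
set g := omega_lab R.
have Htau : tau = map g sigma by rewrite /tau /Omega -/t0 -/R inorder_lmap Hin.
have HsR : sorted ltn R by apply: sorted_rspine.
have HRs : {subset R <= sigma} by move=> x Hx; rewrite -Hin; apply: rspine_sub.
have HR0 : nth 0 R 0 = 1.
  have Hne : sigma != [::] by rewrite -size_eq0 Hsz -lt0n.
  rewrite /R /t0 /Psi; case Es: (size sigma) => [|k]; first by move: Hne; rewrite -size_eq0 Es.
  rewrite psi_fS //=; apply: wmin_eq; first by rewrite Hmem Hn.
  by move=> y; rewrite Hmem => /andP[].
have HnR : n \in R.
  have := last_rspine t0 0; rewrite Hin -nth_last Hsz Hlast inE => /orP[/eqP E|//].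
  by move: Hn; rewrite E.
have HuI : uniq (inorder t0) by rewrite Hin.
have HF1 : forall v y, v \in R -> y \in sigma -> index v sigma < index y sigma -> v < y.
  by move=> v y Hv Hy Hi; apply: (F1 Hh HuI Hv); rewrite Hin.
have HF2 : forall j y, j.+1 < size R -> y \in sigma ->
    index (nth 0 R j) sigma < index y sigma -> nth 0 R j.+1 <= y.
  by move=> j y Hj Hy Hi; apply: (F2 Hh HuI Hj); rewrite Hin.
have HF3 : forall y, y \in sigma -> y \notin R ->
    exists v, [/\ v \in R, index y sigma < index v sigma & v < y].
  by move=> y Hy HyR; rewrite -Hin; apply: F3 => //; rewrite Hin.
have [P1 P2 P3 P4] := all_stats Hn Hperm HsR HRs HR0 HnR HF1 HF2 HF3.
rewrite Htau; split => //.
set tt := lmap g t0.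
have Htt : inorder tt = map g sigma by rewrite /tt inorder_lmap Hin.
have H0 : 0 \notin sigma by rewrite Hmem.
have Hdd : forall k, k \in sigma -> ~~ has_dd [seq x <- sigma | x <= k].
  by move=> k; rewrite Hmem => Hk; apply: Hss.
have /andP[Hht HAt] : heap tt && andT tt.
  have := @spine_walk sigma Hus H0 Hdd t0 R [::] [::] erefl; rewrite /= Hin /tt /g.
  apply => //; first by rewrite /t0 Hshape.
have Hut : uniq (inorder tt) by rewrite Htt (perm_uniq P1) iota_uniq.
split => //.
- by rewrite /andreII -Htt andre_inorder.
- by rewrite /Psi -Htt psi_inorder // /tt shape_lmap.
Qed.
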